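(* Let $\Gamma$ be a labeled oriented tree of Coxeter type with at least $3$ vertices, let $\Upsilon$ be its associated Coxeter tree, and assume that all edge labels $m_e$ of $\Upsilon$ satisfy $m_e\ge 3$. Then $G(\Gamma)$ is large.
   Context: A labeled oriented tree (LOT) $\Gamma$ is a finite tree with vertex set $\mathbf{x}$ whose edges are oriented and each edge is labeled by a (possibly empty) word $w$ in $\mathbf{x}^{\pm1}$; for the edge $e=(x\xrightarrow{w}y)$ set $r_e=xw(wy)^{-1}$; $G(\Gamma)=\langle\mathbf{x}\mid r_e,\ e\text{ an edge}\rangle$. $\Gamma$ is of Coxeter type if for every edge $e=(x\xrightarrow{w}y)$ every letter $z\ne x,y$ occurs in $w$ only with even exponents. For such $\Gamma$, each $r_e$ reduces, up to cyclic permutation, in $\langle\mathbf{x}\mid x^2,x\in\mathbf{x}\rangle$ to $(yx)^{m_e}$ with $m_e\ge1$ odd; the associated Coxeter tree $\Upsilon$ is obtained from $\Gamma$ by erasing orientations and edge words and labeling each edge $e$ by $m_e$. A group is large if it has a subgroup of finite index that admits an epimorphism onto a free group of rank $\ge 2$. *)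

(* Defs.v *)
From Stdlib Require List.
From mathcomp Require Import all_boot all_order all_algebra.
Set Implicit Arguments. Unset Strict Implicit. Unset Printing Implicit Defensive.

(* A letter (a, false) stands for a, (a, true) for a^{-1}. *)
Definition word (A : Type) := seq (A * bool).

Definition winv (A : Type) (w : word A) : word A :=
  rev (map (fun p => (p.1, ~~ p.2)) w).

Definition fpush (A : eqType) (a : A * bool) (w : word A) : word A :=
  match w with
  | b :: w' => if (a.1 == b.1) && (a.2 != b.2) then w' else a :: w
  | [::] => [:: a]
  end.
Definition freduce (A : eqType) (w : word A) : word A := foldr (@fpush A) [::] w.

(* A group is given by its carrier, an equality (setoid) relation and
   operations; the concrete groups below (free groups, presented groups)
   are genuine groups w.r.t. [geq]. *)
Record grp := Grp {
  gcar :> Type;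
  geq : gcar -> gcar -> Prop;
  gmul : gcar -> gcar -> gcar;
  ginv : gcar -> gcar;
  gone : gcar }.

Definition free_grp (A : eqType) : grp :=
  @Grp (word A) (fun u v => freduce u = freduce v) (@cat _) (@winv A) [::].

Inductive ncl (A : eqType) (R : word A -> Prop) : word A -> Prop :=
| ncl_nil : ncl R [::]
| ncl_conj (u r w : word A) (b : bool) :
    R r -> ncl R w -> ncl R (u ++ (if b then winv r else r) ++ winv u ++ w)
| ncl_red (w w' : word A) : freduce w = freduce w' -> ncl R w -> ncl R w'.

Definition presented_grp (A : eqType) (R : word A -> Prop) : grp :=
  @Grp (word A) (fun u v => ncl R (u ++ winv v)) (@cat _) (@winv A) [::].

Definition subgroup (G : grp) (H : G -> Prop) : Prop :=
  [/\ (forall x y, geq x y -> H x -> H y), H (gone G),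
      (forall x y, H x -> H y -> H (gmul x y)) &
      (forall x, H x -> H (ginv x))].

Definition finite_index (G : grp) (H : G -> Prop) : Prop :=
  exists s : seq G, forall g : G, exists t, List.In t s /\ H (gmul (ginv t) g).

Definition hom_on (G K : grp) (H : G -> Prop) (f : G -> K) : Prop :=
  (forall x y, H x -> H y -> geq x y -> geq (f x) (f y)) /\
  (forall x y, H x -> H y -> geq (f (gmul x y)) (gmul (f x) (f y))).

Definition surj_on (G K : grp) (H : G -> Prop) (f : G -> K) : Prop :=
  forall k : K, exists g, H g /\ geq (f g) k.

Definition large (G : grp) : Prop :=
  exists H : G -> Prop, subgroup H /\ finite_index H /\
    exists k : nat, 2 <= k /\
      exists f : G -> free_grp 'I_k, hom_on H f /\ surj_on H f.

(* vertex set X, edge set E, edge e = (src e --lab e--> tgt e) *)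
Definition lot_adj (X E : finType) (src tgt : E -> X) : rel X :=
  fun x y => [exists e, ((src e == x) && (tgt e == y)) || ((src e == y) && (tgt e == x))].

Definition is_tree (X E : finType) (src tgt : E -> X) : Prop :=
  0 < #|X| /\ #|E| = #|X| - 1 /\ (forall x y, connect (lot_adj src tgt) x y).

(* r_e = x w (w y)^{-1} *)
Definition lot_rel (X E : finType) (src tgt : E -> X) (lab : E -> word X) (e : E)
  : word X := [:: (src e, false)] ++ lab e ++ winv (lab e ++ [:: (tgt e, false)]).

Definition lot_group (X E : finType) (src tgt : E -> X) (lab : E -> word X) : grp :=
  presented_grp (fun r => exists e, r = lot_rel src tgt lab e).

Definition syl_push (A : eqType) (a : A * bool) (acc : seq (A * int)) : seq (A * int) :=
  let s : int := if a.2 then (-1)%R else 1%R in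
  match acc with
  | (b, n) :: t => if a.1 == b then (b, (s + n)%R) :: t else (a.1, s) :: acc
  | [::] => [:: (a.1, s)]
  end.
Definition syllables (A : eqType) (w : word A) : seq (A * int) :=
  foldr (@syl_push A) [::] w.

Definition coxeter_type (X E : finType) (src tgt : E -> X) (lab : E -> word X) : Prop :=
  forall e, all (fun p => (p.1 == src e) || (p.1 == tgt e) || (2 %| p.2)%Z)
                (syllables (freduce (lab e))).

Definition cpush (A : eqType) (a : A) (w : seq A) : seq A :=
  match w with
  | b :: w' => if a == b then w' else a :: w
  | [::] => [:: a]
  end.
Definition creduce (A : eqType) (w : seq A) : seq A := foldr (@cpush A) [::] w.
(* image of a free-group word in < X | x^2 > (x^{-1} = x there) *)
Definition cimage (A : eqType) (w : word A) : seq A := creduce (map fst w).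
(* conjugacy in < X | x^2 >  (u^{-1} = rev u there) *)
Definition cconj (A : eqType) (a b : seq A) : Prop :=
  exists u : seq A, creduce (u ++ a ++ rev u) = creduce b.

(* label m_e of edge e in the Coxeter tree: r_e is conjugate to (y x)^m *)
Definition coxeter_label (X E : finType) (src tgt : E -> X) (lab : E -> word X)
  (e : E) (m : nat) : Prop :=
  cconj (cimage (lot_rel src tgt lab e)) (flatten (nseq m [:: tgt e; src e])).

(* Main.v *)
Require Import Defs.
From mathcomp Require Import all_boot all_order all_algebra.
From mathcomp Require Import ring.
From Stdlib Require Import ClassicalEpsilon.
Set Implicit Arguments. Unset Strict Implicit. Unset Printing Implicit Defensive.

Section Free.
Variable A : eqType.
Implicit Types (w u v z : word A) (a b : A * bool).

Definition flip a : A * bool := (a.1, ~~ a.2).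
Definition canc a b := (a.1 == b.1) && (a.2 != b.2).
Lemma flipK a : flip (flip a) = a.
Proof. by case: a => ? []. Qed.

Fixpoint reduced w : bool :=
  match w with
  | a :: ((b :: _) as w') => ~~ canc a b && reduced w'
  | _ => true
  end.

Lemma reduced_tl a w : reduced (a :: w) -> reduced w.
Proof. by case: w => //= b w /andP[]. Qed.

Lemma fpush_red a z : reduced z -> reduced (fpush a z).
Proof.
case: z => [|b z] //= Hz.
case: ifP => H; first exact: reduced_tl Hz.
by rewrite /= /canc H Hz.
Qed.

Lemma freduce_red w : reduced (freduce w).
Proof. by elim: w => //= a w IH; apply: fpush_red. Qed.

Lemma fpush_inv a z : reduced z -> fpush a (fpush (flip a) z) = z.
Proof.
case: a => x bx; case: z => [|[y bb] z] /=.
  by rewrite eqxx; case: bx.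
move=> Hz; case: ifP => H.
  move/andP: H => [/eqP e1 e2]; subst y.
  have ebx : bb = bx by move: e2; clear; case: bx; case: bb.
  subst bb.
  case: z Hz => [|[y' b'] z] /=; first by [].
  move=> /andP[Hc _]; rewrite /canc /= in Hc.
  by rewrite (negbTE Hc).
by rewrite /= eqxx /=; case: bx H.
Qed.

Lemma freduce_id w : reduced w -> freduce w = w.
Proof.
elim: w => //= a w IH Hw.
rewrite IH; last exact: reduced_tl Hw.
case: w Hw {IH} => [|b w] //= /andP[Hc _].
by rewrite /canc in Hc; rewrite (negbTE Hc).
Qed.

Lemma freduce_cat u v : freduce (u ++ v) = foldr (@fpush A) (freduce v) u.
Proof. by rewrite /freduce foldr_cat. Qed.

Lemma act_red z u : reduced z ->
  foldr (@fpush A) z u = foldr (@fpush A) z (freduce u).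
Proof.
move=> Hz; elim: u => //= a u IH.
rewrite IH.
have Hr := freduce_red u.
move: Hr; case: (freduce u) => [|b r] //= Hr.
case: ifP => H //=.
have -> : a = flip b.
  move/andP: H => [/eqP e1 e2]; case: a b e1 e2 {Hr} => x bx [y bb] /= ->.
  by case: bx; case: bb.
have : reduced (foldr (@fpush A) z r).
  by elim: r {Hr} => //= c r IHr; apply: fpush_red.
by move/(fpush_inv (flip b)); rewrite flipK.
Qed.

Lemma freduceK w : freduce (freduce w) = freduce w.
Proof. exact/freduce_id/freduce_red. Qed.

Lemma freduceC u v : freduce (u ++ v) = freduce (freduce u ++ freduce v).
Proof.
rewrite !freduce_cat freduceK; apply: act_red; exact: freduce_red.
Qed.

Lemma winv_cons a w : winv (a :: w) = winv w ++ [:: flip a].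
Proof. by rewrite /winv /= rev_cons cats1. Qed.

Lemma winv_cat u v : winv (u ++ v) = winv v ++ winv u.
Proof. by rewrite /winv map_cat rev_cat. Qed.

Lemma winvK w : winv (winv w) = w.
Proof.
rewrite /winv map_rev revK -map_comp.
by rewrite -[RHS]map_id; apply: eq_map => -[x []].
Qed.

Lemma cancel_gen z w : reduced z -> foldr (@fpush A) z (w ++ winv w) = z.
Proof.
elim: w z => //= a w IH z Hz.
rewrite winv_cons catA foldr_cat /= IH; last exact: fpush_red.
by rewrite fpush_inv.
Qed.

Definition feq u v := freduce u = freduce v.

Lemma feq_refl u : feq u u. Proof. by []. Qed.
Lemma feq_sym u v : feq u v -> feq v u. Proof. by []. Qed.
Lemma feq_trans u v w : feq u v -> feq v w -> feq u w.
Proof. by rewrite /feq => ->. Qed.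

Lemma feq_cat u u' v v' : feq u u' -> feq v v' -> feq (u ++ v) (u' ++ v').
Proof. by rewrite /feq freduceC => -> ->; rewrite -freduceC. Qed.

Lemma feq_winvr w : feq (w ++ winv w) [::].
Proof. by rewrite /feq {1}/freduce cancel_gen. Qed.

Lemma feq_winvl w : feq (winv w ++ w) [::].
Proof. by have := feq_winvr (winv w); rewrite winvK. Qed.

Lemma feq_catl u v : feq u [::] -> feq (u ++ v) v.
Proof. by move=> H; have := feq_cat H (feq_refl v). Qed.
Lemma feq_catr u v : feq v [::] -> feq (u ++ v) u.
Proof. by move=> H; have := feq_cat (feq_refl u) H; rewrite cats0. Qed.

Lemma feq_conj_triv u c : feq (u ++ c ++ winv u) [::] -> feq c [::].
Proof.
move=> H.
have H1 : feq (winv u ++ (u ++ c ++ winv u) ++ u) (winv u ++ [::] ++ u).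
  by apply: feq_cat => //; apply: feq_cat.
have E : winv u ++ (u ++ c ++ winv u) ++ u = (winv u ++ u) ++ c ++ (winv u ++ u).
  by rewrite !catA.
rewrite E in H1.
have H2 : feq ((winv u ++ u) ++ c ++ (winv u ++ u)) c.
  apply: feq_trans (feq_catl _ (feq_winvl u)) _.
  exact: (feq_catr c (feq_winvl u)).
apply: feq_trans (feq_sym H2) (feq_trans H1 (feq_winvl u)).
Qed.

Lemma feq_inv_unique u v : feq (u ++ winv v) [::] -> feq u v.
Proof.
move=> H.
have H1 : feq ((u ++ winv v) ++ v) ([::] ++ v) by apply: feq_cat.
apply: feq_trans H1; rewrite -catA.
exact: feq_sym (feq_catr u (feq_winvl v)).
Qed.

Lemma feq_winv u v : feq u v -> feq (winv u) (winv v).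
Proof.
move=> H; apply: feq_inv_unique; rewrite winvK.
apply: feq_trans (feq_winvl u).
by apply: feq_cat.
Qed.

Lemma feq_nil_winv u : feq u [::] -> feq (winv u) [::].
Proof. by move=> H; exact: (feq_winv H). Qed.

End Free.

Section Walk.
Variables (B : eqType) (P L : Type) (act : L -> P -> P) (gam : P -> L -> word B).
Hypothesis act_inv : forall l p, act l (act l p) = p.
Hypothesis gam_inv : forall l p, feq (gam p l ++ gam (act l p) l) [::].

Fixpoint cend p (s : seq L) : P :=
  if s is l :: s' then cend (act l p) s' else p.
Fixpoint cval p (s : seq L) : word B :=
  if s is l :: s' then gam p l ++ cval (act l p) s' else [::].

Lemma cend_cat p s t : cend p (s ++ t) = cend (cend p s) t.
Proof. by elim: s p => //= l s IH p. Qed.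

Lemma cval_cat p s t : cval p (s ++ t) = cval p s ++ cval (cend p s) t.
Proof. by elim: s p => //= l s IH p; rewrite IH catA. Qed.

Lemma cend_rev p s : cend (cend p s) (rev s) = p.
Proof.
elim: s p => //= l s IH p.
by rewrite rev_cons -cats1 cend_cat IH /= act_inv.
Qed.

Lemma gam_inv' l p : feq (gam (act l p) l) (winv (gam p l)).
Proof. apply: feq_inv_unique; rewrite winvK.
have := gam_inv l (act l p); by rewrite act_inv.
Qed.

Lemma cval_rev p s : feq (cval (cend p s) (rev s)) (winv (cval p s)).
Proof.
elim: s p => //= l s IH p.
rewrite rev_cons -cats1 cval_cat cend_rev /= cats0 winv_cat.
by apply: feq_cat; [apply: IH | apply: gam_inv'].
Qed.

Lemma cend_rev' p s : cend (cend p (rev s)) s = p.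
Proof. by have := cend_rev p (rev s); rewrite revK. Qed.

Lemma cend_inj s p q : cend p s = cend q s -> p = q.
Proof. by move=> H; rewrite -(cend_rev p s) H cend_rev. Qed.

Lemma triv_rev s : (forall p, cend p s = p /\ feq (cval p s) [::]) ->
  forall p, cend p (rev s) = p /\ feq (cval p (rev s)) [::].
Proof.
move=> H p; have [H1 H2] := H p.
have E : cend p (rev s) = p by rewrite -{1}H1 cend_rev.
split => //.
have := cval_rev p s; rewrite H1 => H3.
apply: feq_trans H3 _; exact: feq_nil_winv.
Qed.

Lemma triv_nseq s n : (forall p, cend p s = p /\ feq (cval p s) [::]) ->
  forall p, cend p (flatten (nseq n s)) = p /\ feq (cval p (flatten (nseq n s))) [::].
Proof.
move=> H; elim: n => //= n IH p.
rewrite cend_cat cval_cat; have [H1 H2] := H p; rewrite H1.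
have [H3 H4] := IH p; split => //.
by apply: feq_trans (feq_catl _ H2) _.
Qed.

Lemma triv_conj u c :
  (forall p, cend p (u ++ c ++ rev u) = p /\ feq (cval p (u ++ c ++ rev u)) [::]) ->
  forall p, cend p c = p /\ feq (cval p c) [::].
Proof.
move=> H p'.
pose p := cend p' (rev u).
have Hu : cend p u = p' by rewrite /p cend_rev'.
have [H1 H2] := H p.
rewrite !cend_cat Hu in H1.
have Hc : cend p' c = p'.
  apply: (@cend_inj (rev u)); by rewrite H1.
split => //.
rewrite !cval_cat Hu Hc in H2.
have H3 := cval_rev p u; rewrite Hu in H3.
apply: (@feq_conj_triv _ (cval p u)).
apply: feq_trans H2.
apply: feq_cat => //; apply: feq_cat => //; exact: feq_sym.
Qed.

End Walk.

Section WalkEq.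
Variables (B : eqType) (P : Type) (L : eqType) (act : L -> P -> P) (gam : P -> L -> word B).
Hypothesis act_inv : forall l p, act l (act l p) = p.
Hypothesis gam_inv : forall l p, feq (gam p l ++ gam (act l p) l) [::].

Local Notation cend := (cend act).
Local Notation cval := (cval act gam).

Lemma cpush_ok p l s : cend p (cpush l s) = cend p (l :: s) /\
  feq (cval p (cpush l s)) (cval p (l :: s)).
Proof.
case: s => [|l' s] //=.
case: ifP => // /eqP <-; rewrite act_inv; split => //.
rewrite catA; apply: feq_sym; exact: feq_catl.
Qed.

Lemma creduce_ok p s : cend p (creduce s) = cend p s /\
  feq (cval p (creduce s)) (cval p s).
Proof.
elim: s p => //= l s IH p.
have [H1 H2] := cpush_ok p l (creduce s).
rewrite H1 /=; have [H3 H4] := IH (act l p); rewrite H3; split => //.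
apply: feq_trans H2 _; exact: feq_cat.
Qed.

Definition wend p (w : word L) := cend p (map fst w).
Definition wval p (w : word L) := cval p (map fst w).

Lemma map_fst_winv (w : word L) : map fst (winv w) = rev (map fst w).
Proof. by rewrite /winv map_rev -map_comp. Qed.

Lemma wfpush_ok p a (w : word L) : wend p (fpush a w) = wend p (a :: w) /\
  feq (wval p (fpush a w)) (wval p (a :: w)).
Proof.
rewrite /wend /wval.
case: w => [|b w] //=.
case: ifP => // /andP[/eqP e _]; rewrite e act_inv; split => //.
rewrite catA; apply: feq_sym; exact: feq_catl.
Qed.

Lemma wfreduce_ok p (w : word L) : wend p (freduce w) = wend p w /\
  feq (wval p (freduce w)) (wval p w).
Proof.
elim: w p => //= a w IH p.
have [H1 H2] := wfpush_ok p a (freduce w).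
rewrite H1 /wend /wval /=; have [H3 H4] := IH (act a.1 p).
rewrite /wend in H3; rewrite H3; split => //.
apply: feq_trans H2 _; exact: feq_cat.
Qed.

Definition wtriv (w : word L) := forall p, wend p w = p /\ feq (wval p w) [::].

Lemma wtriv_winv w : wtriv w -> wtriv (winv w).
Proof. by rewrite /wtriv /wend /wval map_fst_winv; apply: (triv_rev act_inv gam_inv). Qed.

Lemma ncl_triv (R : word L -> Prop) : (forall r, R r -> wtriv r) ->
  forall w, ncl R w -> wtriv w.
Proof.
move=> HR w; elim => {w}.
- by [].
- move=> u r w0 b Rr _ Hw p.
  have Hrr : wtriv (if b then winv r else r).
    by case: b; [apply: wtriv_winv|]; apply: HR.
  rewrite /wend /wval !map_cat map_fst_winv !cend_cat !cval_cat.
  have [E1 E2] := Hrr (cend p (map fst u)); rewrite /wend /wval in E1 E2.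
  rewrite E1 (cend_rev act_inv).
  have [E3 E4] := Hw p; rewrite /wend /wval in E3 E4.
  rewrite E3; split => //.
  have E5 := cval_rev act_inv gam_inv p (map fst u).
  apply: (@feq_trans _ _ (cval p (map fst u) ++ [::] ++ winv (cval p (map fst u)) ++ [::])).
    apply: feq_cat => //; apply: feq_cat => //; exact: feq_cat.
  rewrite cats0 /=; exact: feq_winvr.
- move=> w1 w2 E _ Hw p.
  have [H1 H2] := wfreduce_ok p w1; have [H3 H4] := wfreduce_ok p w2.
  have [H5 H6] := Hw p.
  rewrite -H3 -E H1 H5; split => //.
  apply: feq_trans (feq_sym H4) _; rewrite -E; exact: feq_trans H2 H6.
Qed.

End WalkEq.

Lemma in_In (T : eqType) (x : T) (s : seq T) : x \in s -> List.In x s.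
Proof.
elim: s => //= y s IH; rewrite in_cons => /orP[/eqP ->|/IH]; [left|right] => //.
Qed.

Section Large.
Variables (P : finType) (L : eqType) (act : L -> P -> P) (gam : P -> L -> word 'I_2).
Hypothesis act_inv : forall l p, act l (act l p) = p.
Hypothesis gam_inv : forall l p, feq (gam p l ++ gam (act l p) l) [::].
Variable R : word L -> Prop.
Hypothesis HR : forall r, R r -> wtriv act gam r.
Variable p0 : P.
Variable loop : 'I_2 -> word L.
Hypothesis Hloop : forall i, wend act p0 (loop i) = p0 /\
  feq (wval act gam p0 (loop i)) [:: (i, false)].

Local Notation wend := (wend act).
Local Notation wval := (wval act gam).

Lemma wend_cat p u v : wend p (u ++ v) = wend (wend p u) v.
Proof. by rewrite /wend map_cat cend_cat. Qed.
Lemma wval_cat p u v : wval p (u ++ v) = wval p u ++ wval (wend p u) v.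
Proof. by rewrite /wval map_cat cval_cat. Qed.
Lemma wend_winv p u : wend (wend p u) (winv u) = p.
Proof. by rewrite /wend map_fst_winv (cend_rev act_inv). Qed.
Lemma wend_winv' p u : wend (wend p (winv u)) u = p.
Proof. by have := wend_winv p (winv u); rewrite winvK. Qed.
Lemma wval_winv p u : feq (wval (wend p u) (winv u)) (winv (wval p u)).
Proof. rewrite /wval /wend map_fst_winv; exact: (cval_rev act_inv gam_inv). Qed.

Lemma large_presented : large (presented_grp R).
Proof.
pose H := fun g : word L => wend p0 g = p0.
have geqT : forall x y, ncl R (x ++ winv y) -> wtriv act gam (x ++ winv y).
  move=> x y; exact: (ncl_triv act_inv gam_inv HR).
exists H; split; [|split].
- split.
  + move=> x y /= /geqT Hxy; rewrite /H => Hx.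
    have [E _] := Hxy p0; rewrite wend_cat Hx in E.
    by rewrite -E wend_winv'.
  + by [].
  + by move=> x y; rewrite /H /= wend_cat => -> ->.
  + by move=> x; rewrite /H /= => Hx; rewrite -{1}Hx wend_winv.
- pose pk q := epsilon (inhabits [::]) (fun w : word L => wend p0 w = q).
  exists (map (fun q => winv (pk q)) (enum P)) => g.
  exists (winv (pk (wend p0 (winv g)))); split.
    by apply: in_In; apply: map_f; rewrite mem_enum.
  rewrite /H /= winvK wend_cat.
  have -> : wend p0 (pk (wend p0 (winv g))) = wend p0 (winv g).
    apply: (epsilon_spec (inhabits [::]) (fun w : word L => wend p0 w = _)).
    by exists (winv g).
  exact: wend_winv'.
- exists 2; split => //.
  exists (fun g : word L => wval p0 g : free_grp 'I_2); split.
  + split.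
    * move=> x y Hx Hy /= /geqT Hxy.
      have [_ E] := Hxy p0; rewrite wval_cat Hx in E.
      have E2 := wval_winv p0 y; rewrite Hy in E2.
      apply: feq_inv_unique; apply: feq_trans E.
      apply: feq_cat => //; exact: feq_sym.
    * by move=> x y Hx Hy /=; rewrite wval_cat Hx.
  + move=> k /=; elim: k => [|[i b] k [g [Hg Eg]]].
      by exists [::].
    exists ((if b then winv (loop i) else loop i) ++ g); split.
      rewrite /H wend_cat; have [E1 _] := Hloop i.
      by case: b; rewrite ?E1 // -{1}E1 wend_winv.
    rewrite wval_cat.
    have [E1 E2] := Hloop i.
    have -> : wend p0 (if b then winv (loop i) else loop i) = p0.
      by case: b; rewrite ?E1 // -{1}E1 wend_winv.
    rewrite -cat1s; apply: feq_cat => //.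
    case: b => //.
    have E3 := wval_winv p0 (loop i); rewrite E1 in E3.
    apply: feq_trans E3 _.
    exact: (feq_winv E2).
Qed.

End Large.

Section Conn.
Variables (X E : finType) (s t : E -> X) (F : pred E).
Definition adjF : rel X := fun x y =>
  [exists e, F e && (((s e == x) && (t e == y)) || ((s e == y) && (t e == x)))].

Lemma adjF_sym : symmetric adjF.
Proof.
move=> x y; apply/existsP/existsP => -[e He]; exists e; by rewrite orbC.
Qed.

Hypothesis Hc : forall x y, connect adjF x y.

Lemma conn_card : #|X| <= #|F| + 1.
Proof.
have [r _ | X0] := pickP (@predT X); last first.
  by rewrite (eq_card0 (A := predT)) // => x; rewrite !inE X0.
pose Pn (v : X) (n : nat) := [exists p : n.-tuple X, path adjF v p && (last v p == r)].
have exP v : exists n, Pn v n.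
  have /connectP [p pth lst] := Hc v r.
  exists (size p); apply/existsP; exists (in_tuple p); by rewrite /= pth -lst eqxx.
pose d v := ex_minn (exP v).
have dP v n : Pn v n -> d v <= n.
  by rewrite /d; case: ex_minnP => k _ Hk /Hk.
have Pd v : Pn v (d v) by rewrite /d; case: ex_minnP.
have par v : v != r -> exists w, adjF v w && (d w < d v).
  move=> vr; have /existsP [p /andP [pth lst]] := Pd v.
  have sz := size_tuple p.
  move: pth lst sz; case: (tval p) => [|w q] /=.
    by move=> _ /eqP Ee; rewrite Ee eqxx in vr.
  move=> /andP [Hvw pq] lst sz; exists w; rewrite Hvw /=.
  have : Pn w (size q) by apply/existsP; exists (in_tuple q); rewrite /= pq lst.
  by move/dP; rewrite -sz.
pose pw v := odflt v [pick w | adjF v w && (d w < d v)].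
have pwP v : v != r -> adjF v (pw v) && (d (pw v) < d v).
  move=> /par [w Hw]; rewrite /pw; case: pickP => [w' ->|/(_ w)] //.
  by rewrite Hw.
pose fe v := [pick e | F e && (((s e == v) && (t e == pw v)) || ((s e == pw v) && (t e == v)))].
have feP v : v != r -> exists e, fe v = Some e /\
    F e && (((s e == v) && (t e == pw v)) || ((s e == pw v) && (t e == v))).
  move=> /pwP /andP [/existsP [e He] _]; rewrite /fe; case: pickP => [e' He'|/(_ e)].
    by exists e'.
  by rewrite He.
have inj : {in [set v | v != r] &, injective fe}.
  move=> u v; rewrite !inE => ur vr Euv.
  have [e [Eu Hu]] := feP u ur; have [e' [Ev Hv]] := feP v vr.
  rewrite Euv Ev in Eu; case: Eu => ee; subst e'.
  have /andP[_ du] := pwP u ur; have /andP[_ dv] := pwP v vr.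
  apply/eqP; apply/negPn/negP => nuv.
  move: Hu Hv => /andP[_ /orP[/andP[/eqP su /eqP tu]|/andP[/eqP su /eqP tu]]]
                 /andP[_ /orP[/andP[/eqP sv /eqP tv]|/andP[/eqP sv /eqP tv]]].
  - by rewrite -su sv eqxx in nuv.
  - have e1 : pw v = u by rewrite -sv su.
    have e2 : pw u = v by rewrite -tu tv.
    by move: du dv; rewrite e1 e2 => /ltn_trans H /H; rewrite ltnn.
  - have e1 : pw v = u by rewrite -tv tu.
    have e2 : pw u = v by rewrite -su sv.
    by move: du dv; rewrite e1 e2 => /ltn_trans H /H; rewrite ltnn.
  - by rewrite -tu tv eqxx in nuv.
have : #|fe @: [set v | v != r]| <= #|[set Some e | e in F]|.
  apply: subset_leq_card; apply/subsetP => o /imsetP [v]; rewrite inE => vr ->.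
  have [e [-> /andP[Fe _]]] := feP v vr.
  by apply/imsetP; exists e.
rewrite (card_in_imset inj).
have -> : [set v | v != r] = [set~ r] by apply/setP => v; rewrite !inE.
rewrite cardsC1 => H1.
have H2 := leq_imset_card Some F.
have : #|X|.-1 <= #|F| by apply: leq_trans H1 _.
have : 0 < #|X| by apply/card_gt0P; exists r.
by case: #|X| => // n _; rewrite addn1.
Qed.
End Conn.

Section Tree.
Variables (X E : finType) (src tgt : E -> X).
Hypothesis Htree : is_tree src tgt.
Hypothesis H3 : 3 <= #|X|.

Lemma no_cycle e : ~~ connect (adjF src tgt (predC1 e)) (src e) (tgt e).
Proof.
case: Htree => [X0 [cE Hc]].
apply/negP => Hst.
have sym := adjF_sym src tgt (predC1 e).
have Hall : forall x y, connect (adjF src tgt (predC1 e)) x y.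
  move=> x y; apply: (connect_sub _ (Hc x y)) => a b /existsP [f Hf].
  case: (eqVneq f e) => [fe|fne].
    subst f; move: Hf => /orP[/andP[/eqP <- /eqP <-]|/andP[/eqP <- /eqP <-]] //.
    by rewrite (sym_connect_sym sym).
  by apply: connect1; apply/existsP; exists f; rewrite /= fne.
have := conn_card Hall; rewrite cardC1 cE.
by move: H3; case: #|X| => [|[|[|n]]] //= _; rewrite addn1 ltnn.
Qed.

Definition side e v := connect (adjF src tgt (predC1 e)) (src e) v.

Lemma side_edge e f : f != e -> side e (src f) = side e (tgt f).
Proof.
move=> fe; rewrite /side.
have sym := adjF_sym src tgt (predC1 e).
have A : adjF src tgt (predC1 e) (src f) (tgt f).
  by apply/existsP; exists f; rewrite /= fe !eqxx.
apply/idP/idP => H.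
  exact: connect_trans H (connect1 A).
apply: connect_trans H _; apply: connect1; by rewrite sym.
Qed.

Lemma side_src e : side e (src e). Proof. exact: connect0. Qed.
Lemma side_tgt e : side e (tgt e) = false. Proof. exact/negbTE/no_cycle. Qed.

Lemma tree_color : exists e1 e2 : E, e1 != e2 /\ exists t1 t2 : X -> bool,
  [/\ (forall e, e != e1 -> t1 (src e) = t1 (tgt e)),
      (forall e, e != e2 -> t2 (src e) = t2 (tgt e)),
      t1 (src e1) != t1 (tgt e1), t2 (src e2) != t2 (tgt e2) &
      [/\ t2 (src e1) = false, t2 (tgt e1) = false, t1 (src e2) = false & t1 (tgt e2) = false]].
Proof.
case: Htree => [X0 [cE Hc]].
have : 1 < #|E| by rewrite cE; move: H3; case: #|X| => [|[|[|n]]].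
case/card_gt1P => e1 [e2 [_ _ ne]].
exists e1, e2; split => //.
exists (fun v => side e1 v != side e1 (src e2)), (fun v => side e2 v != side e2 (src e1)).
have ne' : e2 != e1 by rewrite eq_sym.
split.
- by move=> e /side_edge ->.
- by move=> e /side_edge ->.
- by rewrite side_src side_tgt; case: (side e1 (src e2)).
- by rewrite side_src side_tgt; case: (side e2 (src e1)).
- by rewrite -(side_edge ne) !eqxx -(side_edge ne') !eqxx.
Qed.
End Tree.
Module F5M.
Import GRing.Theory.
Local Open Scope ring_scope.

Inductive clr := CA | CB | CC.

Lemma two_neq0 m : (2 < m)%N -> (2%:R : 'Z_m) != 0.
Proof.
move=> Hm; apply/eqP => /(congr1 (@nat_of_ord _)) /=.
rewrite Zp_cast ?(ltn_trans _ Hm) // (modn_small (m:=1)) ?(ltn_trans _ Hm) // modn_small //.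
Qed.

Section Conc.
Variables (m1 m2 : nat).
Hypothesis Hm1 : (2 < m1)%N.
Hypothesis Hm2 : (2 < m2)%N.
Local Notation PP := ('Z_m1 * 'Z_m2)%type.

Definition actc (c : clr) (p : PP) : PP :=
  match c with
  | CA => (1 - p.1, - p.2)
  | CB => (- p.1, - p.2)
  | CC => (- p.1, 1 - p.2)
  end.

Definition i0 : 'I_2 := ord0.
Definition i1 : 'I_2 := ord_max.

Definition phi (p : PP) : word 'I_2 :=
  if (p.2 == 0) && ((p.1 == 1) || (p.1 == -1)) then [:: (i0, false)]
  else if ((p.1 == 1) && (p.2 == - 2%:R)) || ((p.1 == -1) && (p.2 == 2%:R))
  then [:: (i1, true)] else [::].

Definition gamc (p : PP) (c : clr) : word 'I_2 :=
  if c is CA then winv (phi p) ++ phi (actc CA p) else [::].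

Lemma actc_inv c p : actc c (actc c p) = p.
Proof. by case: c; case: p => i j /=; congr pair; ring. Qed.

Lemma gamc_inv c p : feq (gamc p c ++ gamc (actc c p) c) [::].
Proof.
case: c; [|done|done]; rewrite /gamc actc_inv -!catA.
have := feq_cat (feq_refl (winv (phi p))) (feq_catl (phi p) (feq_winvr (phi (actc CA p)))).
rewrite -catA => H; exact: feq_trans H (feq_winvl _).
Qed.

Lemma phiB p : phi (actc CB p) = phi p.
Proof.
case: p => i j; rewrite /phi /= oppr_eq0 !eqr_oppLR !opprK.
by rewrite (orbC (i == -1)) (orbC (_ && (j == 2%:R))).
Qed.

Local Notation cend := (cend actc).
Local Notation cval := (cval actc gamc).

Lemma pot s p : all (fun c => if c is CC then false else true) s ->
  feq (cval p s) (winv (phi p) ++ phi (cend p s)).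
Proof.
elim: s p => [|c s IH] p.
  by move=> _; apply: feq_sym; exact: feq_winvl.
case: c => // Hs.
  change (feq (gamc p CA ++ cval (actc CA p) s)
    (winv (phi p) ++ phi (cend (actc CA p) s))).
  apply: feq_trans (feq_cat (feq_refl _) (IH _ Hs)) _.
  rewrite /gamc -!catA; apply: feq_cat => //.
  rewrite catA; exact: feq_catl _ (feq_winvr _).
change (feq ([::] ++ cval (actc CB p) s) (winv (phi p) ++ phi (cend (actc CB p) s))).
by rewrite -phiB; apply: IH.
Qed.

Lemma noA s p : all (fun c => if c is CA then false else true) s -> cval p s = [::].
Proof. by elim: s p => [|[] s IH] p //= /IH ->. Qed.

Lemma cend_nseq (s : seq clr) (f : PP -> PP) n p :
  (forall q, cend q s = f q) -> cend p (flatten (nseq n s)) = iter n f p.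
Proof.
move=> Hf; elim: n p => //= n IH p.
by rewrite cend_cat Hf IH -iterSr.
Qed.

Lemma Zchar1 : (m1%:R : 'Z_m1) = 0.
Proof. by apply: pchar_Zp; apply: ltn_trans Hm1. Qed.
Lemma Zchar2 : (m2%:R : 'Z_m2) = 0.
Proof. by apply: pchar_Zp; apply: ltn_trans Hm2. Qed.

Lemma rel_same c n p : cend p (flatten (nseq n [:: c; c])) = p /\
  feq (cval p (flatten (nseq n [:: c; c]))) [::].
Proof.
apply: triv_nseq => q /=; rewrite actc_inv; split => //.
rewrite cats0; exact: gamc_inv.
Qed.

Lemma all_nseq_flat (T : Type) (q : pred T) s n : all q s -> all q (flatten (nseq n s)).
Proof. by move=> H; elim: n => //= n IH; rewrite all_cat H IH. Qed.

Lemma iter_trans n d1 d2 (p : PP) :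
  iter n (fun q : PP => (q.1 + d1, q.2 + d2)) p = (p.1 + d1 *+ n, p.2 + d2 *+ n).
Proof.
elim: n => [|n IH] /=; first by rewrite !addr0; case: p.
by rewrite IH /= !mulrS; congr pair; ring.
Qed.

Lemma rel_trans k1 k2 n d1 d2 p :
  (forall q, cend q [:: k1; k2] = (q.1 + d1, q.2 + d2)) ->
  d1 *+ n = 0 -> d2 *+ n = 0 ->
  cend p (flatten (nseq n [:: k1; k2])) = p.
Proof.
move=> Hq H1 H2; rewrite (cend_nseq _ _ Hq) iter_trans H1 H2 !addr0.
by case: p.
Qed.

Lemma rel_AB (k1 k2 : clr) p :
  (k1 = CA /\ k2 = CB) \/ (k1 = CB /\ k2 = CA) ->
  cend p (flatten (nseq m1 [:: k1; k2])) = p /\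
  feq (cval p (flatten (nseq m1 [:: k1; k2]))) [::].
Proof.
move=> Hk.
have E : cend p (flatten (nseq m1 [:: k1; k2])) = p.
  case: Hk => -[-> ->].
    apply: (@rel_trans _ _ _ (-1) 0).
    - by move=> [i j] /=; congr pair; ring.
    - by rewrite mulNrn -/(1 *+ m1) Zchar1 oppr0.
    - by rewrite mul0rn.
  apply: (@rel_trans _ _ _ 1 0).
  - by move=> [i j] /=; congr pair; ring.
  - exact: Zchar1.
  - by rewrite mul0rn.
split => //.
have : all (fun c => if c is CC then false else true) (flatten (nseq m1 [:: k1; k2])).
  by apply: all_nseq_flat; case: Hk => -[-> ->].
move/(pot p); rewrite E => H; apply: feq_trans H _; exact: feq_winvl.
Qed.

Lemma rel_BC (k1 k2 : clr) p :
  (k1 = CB /\ k2 = CC) \/ (k1 = CC /\ k2 = CB) ->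
  cend p (flatten (nseq m2 [:: k1; k2])) = p /\
  feq (cval p (flatten (nseq m2 [:: k1; k2]))) [::].
Proof.
move=> Hk.
have E : cend p (flatten (nseq m2 [:: k1; k2])) = p.
  case: Hk => -[-> ->].
    apply: (@rel_trans _ _ _ 0 1).
    - by move=> [i j] /=; congr pair; ring.
    - by rewrite mul0rn.
    - exact: Zchar2.
  apply: (@rel_trans _ _ _ 0 (-1)).
  - by move=> [i j] /=; congr pair; ring.
  - by rewrite mul0rn.
  - by rewrite mulNrn -/(1 *+ m2) Zchar2 oppr0.
split => //.
rewrite noA //.
by apply: all_nseq_flat; case: Hk => -[-> ->].
Qed.

Definition L1 := [:: CA; CB; CB; CC; CB; CA; CC; CB].

Lemma L1_end j : cend (0, j) L1 = (0, j).
Proof. by rewrite /=; congr pair; ring. Qed.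

Lemma L1_val j : cval (0, j) L1 =
  winv (phi (0, j)) ++ phi (1, - j) ++ winv (phi (1, - 1 - j)) ++ phi (0, 1 + j).
Proof.
rewrite /= !cats0 -!catA.
congr (_ ++ (phi _ ++ (winv (phi _) ++ phi _))); congr pair; ring.
Qed.

Lemma Z_facts m : (2 < m)%N ->
  [/\ (1 == -1 :> 'Z_m) = false, (0 == 1 :> 'Z_m) = false, (0 == -1 :> 'Z_m) = false,
     (-1 == 0 :> 'Z_m) = false & [/\ (-1 == - 2%:R :> 'Z_m) = false &
     (- 2%:R == 0 :> 'Z_m) = false]].
Proof.
move=> Hm; have H2 := two_neq0 Hm.
have H1 : (1 : 'Z_m) != 0 by apply: oner_neq0.
split; [| | | | split]; apply/negbTE.
- by rewrite -subr_eq0 opprK (_ : 1 + 1 = 2%:R) // -natrD.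
- by rewrite eq_sym oner_eq0.
- by rewrite eq_sym oppr_eq0 oner_eq0.
- by rewrite oppr_eq0 oner_eq0.
- by rewrite eqr_opp -subr_eq0 (_ : 1 - 2%:R = - 1 :> 'Z_m) ?oppr_eq0 //; ring.
- by rewrite oppr_eq0 H2.
Qed.

Lemma phi0 j : phi (0, j) = [::].
Proof.
have [_ a b _ _] := Z_facts Hm1.
by rewrite /phi a b !andbF.
Qed.

Lemma phi1m1 : phi (1, -1) = [::].
Proof.
have [a _ _ _ _] := Z_facts Hm1; have [_ _ _ c [d _]] := Z_facts Hm2.
by rewrite /phi c a d andbF.
Qed.

Definition loopc (i : 'I_2) : seq clr :=
  if val i == 0%N then L1 else [:: CB; CC] ++ L1 ++ [:: CC; CB].

Lemma loop_ok (i : 'I_2) : cend (0, 0) (loopc i) = (0, 0) /\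
  feq (cval (0, 0) (loopc i)) [:: (i, false)].
Proof.
case: i => -[|[|//]] Hi.
  have -> : loopc (Ordinal Hi) = L1 by [].
  split; first exact: L1_end.
  rewrite L1_val phi0 oppr0 phi0 addr0 phi1m1 /=.
  have -> : Ordinal Hi = i0 by apply: val_inj.
  by [].
have E1 : cend (0, 0) [:: CB; CC] = (0, 1) by rewrite /=; congr pair; ring.
have E2 : cend (0, 1) [:: CC; CB] = (0, 0) by rewrite /=; congr pair; ring.
have -> : loopc (Ordinal Hi) = [:: CB; CC] ++ L1 ++ [:: CC; CB] by [].
rewrite !cend_cat E1 L1_end E2; split => //.
rewrite !cval_cat E1 L1_end (@noA [:: CB; CC]) // (@noA [:: CC; CB]) // L1_val phi0 phi0 phi1m1 /= cats0.
rewrite (_ : -1 - 1 = - 2%:R); last by ring.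
have [_ _ _ _ [_ e]] := Z_facts Hm2.
have [a _ _ _ _] := Z_facts Hm1.
rewrite /phi e a eqxx.
have -> : Ordinal Hi = i1 by apply: val_inj.
by rewrite /= eqxx.
Qed.

End Conc.

End F5M.
Import F5M.

Lemma cend_map (P L L' : Type) (f : L' -> P -> P) (h : L -> L') p s :
  cend (fun l => f (h l)) p s = cend f p (map h s).
Proof. by elim: s p => //= l s IH p. Qed.

Lemma cval_map (B : eqType) (P L L' : Type) (f : L' -> P -> P) (g : P -> L' -> word B)
  (h : L -> L') p s :
  cval (fun l => f (h l)) (fun p l => g p (h l)) p s = cval f g p (map h s).
Proof. by elim: s p => //= l s IH p; rewrite IH. Qed.

Unset Implicit Arguments.
Theorem theorem4p1 (X E : finType) (src tgt : E -> X) (lab : E -> word X) :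
  is_tree src tgt ->
  3 <= #|X| ->
  coxeter_type src tgt lab ->
  (forall e : E, exists m : nat, 3 <= m /\ coxeter_label src tgt lab e m) ->
  large (lot_group src tgt lab).
Proof.
move=> Htree H3 _ H4.
have [mf Hmf] : exists mf : E -> nat, forall e, 3 <= mf e /\ coxeter_label src tgt lab e (mf e).
  exists (fun e => proj1_sig (constructive_indefinite_description _ (H4 e))).
  move=> e; exact: (proj2_sig (constructive_indefinite_description _ (H4 e))).
have [e1 [e2 [ne [t1 [t2 [T1 T2 D1 D2 [Z1 Z2 Z3 Z4]]]]]]] := tree_color Htree H3.
pose col v := if t1 v then CA else if t2 v then CC else CB.
pose m1 := mf e1; pose m2 := mf e2.
have Hm1 : 2 < m1 by have [] := Hmf e1.
have Hm2 : 2 < m2 by have [] := Hmf e2.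
pose act := fun v : X => @actc m1 m2 (col v).
pose gam := fun p (v : X) => @gamc m1 m2 p (col v).
have act_inv : forall l p, act l (act l p) = p by move=> l p; exact: actc_inv.
have gam_inv : forall l p, feq (gam p l ++ gam (act l p) l) [::].
  by move=> l p; exact: gamc_inv.
have Hb : forall e p, cend act p (flatten (nseq (mf e) [:: tgt e; src e])) = p /\
    feq (cval act gam p (flatten (nseq (mf e) [:: tgt e; src e]))) [::].
  move=> e p.
  rewrite /act /gam cend_map cval_map map_flatten map_nseq /=.
  case: (eqVneq e e1) => [->|ne1].
    apply: rel_AB => //; rewrite /col Z1 Z2.
    by move: D1; case: (t1 (src e1)); case: (t1 (tgt e1)) => //= _; [right|left].
  case: (eqVneq e e2) => [->|ne2].
    apply: rel_BC => //; rewrite /col Z3 Z4.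
    by move: D2; case: (t2 (src e2)); case: (t2 (tgt e2)) => //= _; [left|right].
  by rewrite /col (T1 _ ne1) (T2 _ ne2); apply: rel_same.
have HR : forall r, (exists e, r = lot_rel src tgt lab e) -> wtriv act gam r.
  move=> r [e ->] p.
  have [_ [u Hu]] := Hmf e.
  set c := cimage (lot_rel src tgt lab e) in Hu.
  have Hc : forall p, cend act p c = p /\ feq (cval act gam p c) [::].
    apply: (triv_conj act_inv gam_inv (u := u)) => q.
    have [E1 E2] := creduce_ok act_inv gam_inv q (u ++ c ++ rev u).
    rewrite Hu in E1 E2.
    have [E3 E4] := creduce_ok act_inv gam_inv q (flatten (nseq (mf e) [:: tgt e; src e])).
    have [E5 E6] := Hb e q.
    rewrite -E1 E3 E5; split => //.
    apply: feq_trans (feq_sym E2) _; apply: feq_trans E4 E6.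
  have [E1 E2] := creduce_ok act_inv gam_inv p (map fst (lot_rel src tgt lab e)).
  have [E3 E4] := Hc p.
  rewrite /wend /wval -E1; split => //.
  apply: feq_trans (feq_sym E2) E4.
pose xA := if t1 (src e1) then src e1 else tgt e1.
pose xB := if t1 (src e1) then tgt e1 else src e1.
pose xC := if t2 (src e2) then src e2 else tgt e2.
pose xc := fun c => match c with CA => xA | CB => xB | CC => xC end.
have Hxc : forall c, col (xc c) = c.
  case; rewrite /col /xc /xA /xB /xC.
  - case E1: (t1 (src e1)); case E2: (t1 (tgt e1)); rewrite ?E1 ?E2 //;
    by move: D1; rewrite E1 E2.
  - case E1: (t1 (src e1)); case E2: (t1 (tgt e1)); rewrite ?E1 ?E2 ?Z1 ?Z2 //;
    by move: D1; rewrite E1 E2.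
  - case E1: (t2 (src e2)); case E2: (t2 (tgt e2)); rewrite ?E1 ?E2 ?Z3 ?Z4 //;
    by move: D2; rewrite E1 E2.
pose loop := fun i : 'I_2 => [seq (xc c, false) | c <- loopc i].
apply: (@large_presented _ _ act gam act_inv gam_inv _ HR (0, 0)%R loop).
move=> i.
have Em : map col (map fst (loop i)) = loopc i.
  rewrite /loop -!map_comp -[RHS]map_id; apply: eq_map => c /=; exact: Hxc.
rewrite /wend /wval /act /gam cend_map cval_map Em.
exact: loop_ok.
Qed.
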